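(* Let $\mathcal{P}$ be a discrete minimization problem with $n$ variables and let $\mathcal{M}$ be a relaxed multivalued decision diagram for $\mathcal{P}$, i.e. $Sol(\mathcal{P}) \subseteq Sol(\mathcal{M})$. Let $u$ be an exact node of $\mathcal{M}$, and let $(\underline{u}, \mathcal{M}^* )$ be the output of the peel operation applied to $(\mathcal{M},u)$, where the filter step removes an arc only if no feasible solution of $\mathcal{P}$ corresponds to a path using that arc. Then $$Sol(\mathcal{P}) \subseteq Sol(\mathcal{M}^* ) \cup Sol(\underline{u}).$$
   Context: A multivalued decision diagram (MDD) $\mathcal{M}$ for a problem with variables $x_1,\dots,x_n$ is a directed acyclic graph whose nodes are partitioned into layers $L_1,\dots,L_{n+1}$; $L_1=\{r\}$ (root, no in-arcs), $L_{n+1}=\{t\}$ (terminal, no out-arcs). Every arc goes from a node on layer $i$ to a node on layer $i+1$ and carries a label $l\in D(x_i)$ (meaning $x_i=l$) and a value. $Sol(\mathcal{M})$ is the set of label sequences of $r$–$t$ paths; $Sol(\mathcal{P})$ is the set of feasible assignments. For a node $v$, $All_v^\downarrow$ (resp. $Some_v^\downarrow$) is the set of labels appearing on every (resp. at least one) $r$–$v$ path. A node $v$ is exact if $Some_v^\downarrow=All_v^\downarrow$ and every arc ending at $v$ starts at an exact node. Peel operation on $(\mathcal{M},u)$, $u$ exact: create a new diagram $\underline{u}$; delete all in-arcs of $u$, remove $u$ from $\mathcal{M}$ and make it the root of $\underline{u}$ (its out-arcs still end in $\mathcal{M}$). While some arc starts in $\underline{u}$ and ends in $\mathcal{M}$: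 for each node $m$ of $\mathcal{M}$ having an in-arc originating in $\underline{u}$, create a new node $m'$ on the same layer in $\underline{u}$, redirect every in-arc of $m$ originating in $\underline{u}$ to $m'$, give $m'$ a copy (same label, value, head) of every out-arc of $m$, and apply the filter to the in-arcs of $m'$ and the out-arcs of $m$ and $m'$. Finally, repeatedly delete from $\mathcal{M}$ every node other than $r,t$ with no in-arcs or no out-arcs (with its arcs); the result is $\mathcal{M}^*$. The copy of $t$ in $\underline{u}$ is its terminal $t'$. $Sol(\underline{u})$ denotes the set of label sequences obtained by concatenating the label sequence of some $r$–$u$ path of the original diagram $\mathcal{M}$ with the label sequence of some $u$–$t'$ path of $\underline{u}$. *)

(* Defs.v *)
From mathcomp Require Import all_boot.
Set Implicit Arguments. Unset Strict Implicit. Unset Printing Implicit Defensive.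

Section MDD.

(* L : type of labels (values of the variables); W : type of arc values. *)
Variables (L W : eqType).

(* An arc: (tail, head, label, value). Nodes are natural numbers. *)
Definition arc := (nat * nat * L * W)%type.
Definition src (a : arc) : nat := a.1.1.1.
Definition dst (a : arc) : nat := a.1.1.2.
Definition lab (a : arc) : L := a.1.2.
Definition aval (a : arc) : W := a.2.
Definition set_src (a : arc) (v : nat) : arc := (v, dst a, lab a, aval a).
Definition set_dst (a : arc) (v : nat) : arc := (src a, v, lab a, aval a).

Fixpoint is_path (G : seq arc) (x y : nat) (p : seq arc) : bool :=
  match p with
  | [::] => x == y
  | a :: p' => [&& a \in G, src a == x & is_path G (dst a) y p']
  end.

Record mdd := MDD {
  mdd_nodes : seq nat;
  mdd_layer : nat -> nat;
  mdd_root : nat;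
  mdd_term : nat;
  mdd_arcs : seq arc }.

(* Well-formedness of an MDD for variables x_1..x_n with domains D i = D(x_i):
   layers L_1..L_{n+1}, L_1 = {r}, L_{n+1} = {t}, every arc from layer i to
   layer i+1 with a label in D(x_i). *)
Definition wf_mdd (n : nat) (D : nat -> pred L) (M : mdd) : Prop :=
  [/\ uniq (mdd_nodes M),
      mdd_root M \in mdd_nodes M, mdd_term M \in mdd_nodes M,
      mdd_layer M (mdd_root M) = 1 & mdd_layer M (mdd_term M) = n.+1] /\
  [/\ (forall v, v \in mdd_nodes M -> 1 <= mdd_layer M v <= n.+1),
      (forall v, v \in mdd_nodes M -> mdd_layer M v = 1 -> v = mdd_root M),
      (forall v, v \in mdd_nodes M -> mdd_layer M v = n.+1 -> v = mdd_term M) &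
      (forall a, a \in mdd_arcs M ->
         [/\ src a \in mdd_nodes M, dst a \in mdd_nodes M,
             mdd_layer M (dst a) = (mdd_layer M (src a)).+1 &
             lab a \in D (mdd_layer M (src a))])].

Definition SolM (M : mdd) (x : seq L) : Prop :=
  exists p, is_path (mdd_arcs M) (mdd_root M) (mdd_term M) p /\ x = map lab p.

Definition feasible_set (n : nat) (D : nat -> pred L) (feas : seq L -> Prop) :=
  forall x, feas x -> size x = n /\ (forall i (d : L), i < n -> nth d x i \in D i.+1).


End MDD.

Section Exact.
Variables (L W : eqType) (M : mdd L W).

Definition SomeDown (v : nat) (l : L) : Prop :=
  exists p, is_path (mdd_arcs M) (mdd_root M) v p /\ l \in map (@lab L W) p.
Definition AllDown (v : nat) (l : L) : Prop :=
  forall p, is_path (mdd_arcs M) (mdd_root M) v p -> l \in map (@lab L W) p.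

Inductive exact : nat -> Prop :=
  exact_intro v :
    (forall l, SomeDown v l <-> AllDown v l) ->
    (forall a, a \in mdd_arcs M -> dst a = v -> exact (src a)) ->
    exact v.
End Exact.

Section Peel.
Variables (L W : eqType).
Variable feas : seq L -> Prop.
Variable M : mdd L W.
Variable u : nat.

Local Notation arc := (arc L W).
Local Notation r := (mdd_root M).
Local Notation t := (mdd_term M).

(* State of the peel operation: all current arcs (of M and of u-bar together),
   layer function, nodes of M, nodes of u-bar, and the terminal t' of u-bar
   (the copy of t, once it has been created). *)
Record pstate := PState {
  ps_arcs : seq arc;
  ps_layer : nat -> nat;
  ps_M : seq nat;
  ps_U : seq nat;
  ps_tp : option nat }.

Definition peel_init : pstate :=
  PState [seq a <- mdd_arcs M | dst a != u] (mdd_layer M)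
         [seq v <- mdd_nodes M | v != u] [:: u]
         (if u == t then Some u else None).

(* Filter condition: arc a may be removed from the current arcs G only if no
   feasible solution of P corresponds to a path using a, i.e. neither an r-t path
   of the current diagram through a, nor (a r-u path of the original M
   followed by) a path of the current diagram from u to the terminal t or t'
   through a. *)
Definition removable (G : seq arc) (tp : option nat) (a : arc) : Prop :=
  ~ exists x, feas x /\
     ((exists p, is_path G r t p /\ a \in p /\ x = map (@lab L W) p) \/
      (exists p q w, is_path (mdd_arcs M) r u p /\ is_path G u w q /\
         (w = t \/ tp = Some w) /\ a \in q /\
         x = map (@lab L W) p ++ map (@lab L W) q)).

(* Processing one node m of M with in-arcs from u-bar, creating the fresh node m'. *)
Definition split_node (st : pstate) (m m' : nat) (st' : pstate) : Prop :=
  let G0 := [seq if (dst a == m) && (src a \in ps_U st) then set_dst a m' else a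
            | a <- ps_arcs st]
            ++ [seq set_src a m' | a <- ps_arcs st & src a == m] in
  let tp' := if m == t then Some m' else ps_tp st in
  [/\ m \in ps_M st,
      m' \notin ps_M st, m' \notin ps_U st,
      (forall a, a \in ps_arcs st -> src a != m' /\ dst a != m') &
      exists bm : bitseq,
        [/\ size bm = size G0,
            (forall i (d : arc), i < size G0 -> ~~ nth false bm i ->
               let a := nth d G0 i in
               [|| dst a == m', src a == m | src a == m'] /\ removable G0 tp' a) &
            st' = PState (mask bm G0)
                    (fun x => if x == m' then ps_layer st m else ps_layer st x)
                    (ps_M st) (m' :: ps_U st) tp']].

Inductive split_seq : pstate -> seq nat -> pstate -> Prop :=
| split_nil st : split_seq st [::] st
| split_cons st m s st1 st2 :
    (exists m', split_node st m m' st1) -> split_seq st1 s st2 ->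
    split_seq st (m :: s) st2.

Definition has_in_from_U (st : pstate) (m : nat) : bool :=
  (m \in ps_M st) && has (fun a => (src a \in ps_U st) && (dst a == m)) (ps_arcs st).

(* one iteration of the while loop: all such nodes m are processed (in some order) *)
Definition peel_iter (st st' : pstate) : Prop :=
  exists s : seq nat,
    [/\ uniq s, s != [::], (forall m, (m \in s) = has_in_from_U st m) &
        split_seq st s st'].

Definition cross_arc (st : pstate) : bool :=
  has (fun a => (src a \in ps_U st) && (dst a \in ps_M st)) (ps_arcs st).

Inductive peel_loop : pstate -> pstate -> Prop :=
| loop_done st : ~~ cross_arc st -> peel_loop st st
| loop_step st st1 st2 : cross_arc st -> peel_iter st st1 -> peel_loop st1 st2 ->
    peel_loop st st2.

Definition trimmable (st : pstate) (v : nat) : bool :=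
  [&& v \in ps_M st, v != r, v != t &
      ~~ has (fun a => dst a == v) (ps_arcs st) || ~~ has (fun a => src a == v) (ps_arcs st)].

Definition trim_node (st : pstate) (v : nat) : pstate :=
  PState [seq a <- ps_arcs st | (src a != v) && (dst a != v)] (ps_layer st)
         [seq w <- ps_M st | w != v] (ps_U st) (ps_tp st).

Inductive trim_loop : pstate -> pstate -> Prop :=
| trim_done st : (forall v, ~~ trimmable st v) -> trim_loop st st
| trim_step st v st2 : trimmable st v -> trim_loop (trim_node st v) st2 ->
    trim_loop st st2.

Definition peel_run (st : pstate) : Prop :=
  exists st1, peel_loop peel_init st1 /\ trim_loop st1 st.

Definition Mstar_arcs (st : pstate) : seq arc :=
  [seq a <- ps_arcs st | (src a \in ps_M st) && (dst a \in ps_M st)].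
Definition Ubar_arcs (st : pstate) : seq arc :=
  [seq a <- ps_arcs st | (src a \in ps_U st) && (dst a \in ps_U st)].

Definition SolMstar (st : pstate) (x : seq L) : Prop :=
  exists p, is_path (Mstar_arcs st) r t p /\ x = map (@lab L W) p.

Definition SolUbar (st : pstate) (x : seq L) : Prop :=
  exists tp, ps_tp st = Some tp /\
  exists p q, is_path (mdd_arcs M) r u p /\ is_path (Ubar_arcs st) u tp q /\
     x = map (@lab L W) p ++ map (@lab L W) q.

End Peel.

(* Main.v *)
Require Import Defs.
From mathcomp Require Import all_boot.
Require Import Defs.
Set Implicit Arguments. Unset Strict Implicit. Unset Printing Implicit Defensive.

Section Gen.
Variables (L W : eqType).
Local Notation arc := (arc L W).

Lemma path_cat (G : seq arc) x y z p q :
  is_path G x y p -> is_path G y z q -> is_path G x z (p ++ q).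
Proof.
elim: p x => [|a p IH] x /=; first by move/eqP->.
by case/and3P => Ha Hs Hp Hq; rewrite Ha Hs (IH _ Hp Hq).
Qed.

Lemma path_sub (G G' : seq arc) x y p :
  is_path G x y p -> (forall a, a \in p -> a \in G') -> is_path G' x y p.
Proof.
elim: p x => [|a p IH] x //= /and3P[Ha Hs Hp] H.
rewrite (H a (mem_head _ _)) Hs /=; apply: (IH _ Hp) => b Hb; apply: H.
by rewrite in_cons Hb orbT.
Qed.

Lemma path_mem (G : seq arc) x y p a : is_path G x y p -> a \in p -> a \in G.
Proof.
elim: p x => [|b p IH] x //= /and3P[Hb _ Hp]; rewrite in_cons => /orP[/eqP->//|].
exact: IH Hp.
Qed.

Lemma path_pred (G : seq arc) x y p a : is_path G x y p -> a \in p ->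
  src a = x \/ exists2 b, b \in p & dst b = src a.
Proof.
elim: p x => [|b p IH] x //= /and3P[Hb /eqP Hs Hp]; rewrite in_cons => /orP[/eqP->|Ha].
  by left.
case: (IH _ Hp Ha) => [->|[c Hc Hd]]; right.
  by exists b; rewrite ?mem_head.
by exists c; rewrite // in_cons Hc orbT.
Qed.

Lemma path_succ (G : seq arc) x y p a : is_path G x y p -> a \in p ->
  dst a = y \/ exists2 b, b \in p & src b = dst a.
Proof.
elim: p x => [|b p IH] x //= /and3P[Hb /eqP Hs Hp].
rewrite in_cons; case Ha: (a \in p); rewrite ?orbT.
  case: (IH _ Hp Ha) => [->|[c Hc Hd]]; first by left.
  by right; exists c; rewrite // in_cons Hc orbT.
rewrite orbF => /eqP ->; case: p Hp {IH Ha} => [/eqP ->|c p] /=; first by left.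
case/and3P => Hc /eqP Hsc _; right; exists c => //.
by rewrite in_cons mem_head orbT.
Qed.

Lemma path_split_u (G : seq arc) (v : nat) x y p : is_path G x y p ->
  (x != v /\ forall a, a \in p -> (src a != v) && (dst a != v)) \/
  exists p1 p2, [/\ p = p1 ++ p2, is_path G x v p1, is_path G v y p2 &
      forall a, a \in p2 -> dst a != v].
Proof.
elim: p x => [|a p IH] x /=.
  move/eqP=> ->; case: (eqVneq y v) => [->|Hyv].
    by right; exists [::], [::]; split => //=; rewrite eqxx.
  by left.
case/and3P=> Ha /eqP Hs Hp; case: (IH _ Hp) => [[Hd Hall]|[p1 [p2 [-> H1 H2 H3]]]].
  case: (eqVneq x v) => [Hxv|Hxv].
    right; exists [::], (a :: p); split => //=; first by rewrite Hxv.
      by rewrite Ha Hs Hxv eqxx.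
    move=> b; rewrite in_cons => /orP[/eqP->//|/Hall /andP[]//].
  left; split => // b; rewrite in_cons => /orP[/eqP->|/Hall//].
  by rewrite Hs Hxv.
right; exists (a :: p1), p2; split => //=.
by rewrite Ha Hs eqxx.
Qed.

Lemma mem_mask_nth (T : eqType) (bm : bitseq) (s : seq T) i d :
  size bm = size s -> i < size s -> nth false bm i -> nth d s i \in mask bm s.
Proof.
elim: s bm i => [|x s IH] [|b bm] [|i] //= [Hs] Hi Hb.
  by rewrite Hb mem_head.
case: b => /=; last exact: IH.
by rewrite in_cons (IH _ _ Hs Hi Hb) orbT.
Qed.

End Gen.

Section Main.
Variables (L W : eqType) (n : nat) (D : nat -> pred L) (feas : seq L -> Prop)
  (M : mdd L W) (u : nat).
Hypothesis wfM : wf_mdd n D M.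
Hypothesis uin : u \in mdd_nodes M.
Local Notation arc := (arc L W).
Local Notation r := (mdd_root M).
Local Notation t := (mdd_term M).
Local Notation labs := (map (@lab L W)).

Definition M0 := [seq v <- mdd_nodes M | v != u].

Lemma t_node : t \in mdd_nodes M.
Proof. by case: wfM => [[]]. Qed.
Lemma t_layer : mdd_layer M t = n.+1.
Proof. by case: wfM => [[]]. Qed.
Lemma node_layer v : v \in mdd_nodes M -> mdd_layer M v <= n.+1.
Proof. by case: wfM => _ [H _ _ _] /H /andP[]. Qed.
Lemma arc_wf a : a \in mdd_arcs M ->
  [/\ src a \in mdd_nodes M, dst a \in mdd_nodes M &
      mdd_layer M (dst a) = (mdd_layer M (src a)).+1].
Proof. by case: wfM => _ [_ _ _ H] /H []. Qed.

Record Sinv (st : pstate L W) : Prop := {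
  s_M : ps_M st = M0;
  s_uU : u \in ps_U st;
  s_disj : forall v, v \in ps_U st -> v \notin ps_M st;
  s_end : forall a, a \in ps_arcs st ->
     ((src a \in ps_M st) || (src a \in ps_U st)) &&
     ((dst a \in ps_M st) || (dst a \in ps_U st));
  s_inU : forall a, a \in ps_arcs st -> dst a \in ps_U st -> src a \in ps_U st;
  s_lay : forall a, a \in ps_arcs st ->
     ps_layer st (dst a) = (ps_layer st (src a)).+1;
  s_layM : forall v, v \in ps_M st -> ps_layer st v = mdd_layer M v;
  s_ut : u = t -> ps_tp st = Some u;
  s_tp : forall w, ps_tp st = Some w -> w \in ps_U st }.

Definition allM (st : pstate L W) (p : seq arc) :=
  all (fun a => (src a \in ps_M st) && (dst a \in ps_M st)) p.

Definition Winv (st : pstate L W) := forall x, feas x ->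
  (exists p, [/\ is_path (ps_arcs st) r t p, allM st p & x = labs p]) \/
  (exists p q w, [/\ is_path (mdd_arcs M) r u p, is_path (ps_arcs st) u w q,
      (w = t \/ ps_tp st = Some w) & x = labs p ++ labs q]).

Definition Linv (st : pstate L W) l :=
  (forall a, a \in ps_arcs st -> src a \in ps_U st -> dst a \in ps_M st ->
     ps_layer st (src a) = l) /\
  (forall w, ps_tp st = Some w -> t <> u -> l = n.+1).

Definition Linv' (st : pstate L W) l (s : seq nat) :=
  [/\ (forall a, a \in ps_arcs st -> src a \in ps_U st -> dst a \in ps_M st ->
     (ps_layer st (src a) = l /\ dst a \in s) \/ ps_layer st (src a) = l.+1),
   (forall m, m \in s -> m \in ps_M st /\ ps_layer st m = l.+1),
   uniq s &
   (forall w, ps_tp st = Some w -> t <> u -> l.+1 = n.+1 /\ t \notin s)].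

Lemma path_cons (G : seq arc) x y a p :
  is_path G x y (a :: p) = [&& a \in G, src a == x & is_path G (dst a) y p].
Proof. by []. Qed.
Lemma src_sd (a : arc) v : src (set_dst a v) = src a. Proof. by []. Qed.
Lemma dst_sd (a : arc) v : dst (set_dst a v) = v. Proof. by []. Qed.
Lemma lab_sd (a : arc) v : lab (set_dst a v) = lab a. Proof. by []. Qed.
Lemma src_ss (a : arc) v : src (set_src a v) = v. Proof. by []. Qed.
Lemma dst_ss (a : arc) v : dst (set_src a v) = dst a. Proof. by []. Qed.
Lemma lab_ss (a : arc) v : lab (set_src a v) = lab a. Proof. by []. Qed.

Definition redir (st : pstate L W) m m' (a : arc) :=
  if (dst a == m) && (src a \in ps_U st) then set_dst a m' else a.
Definition G0 (st : pstate L W) m m' :=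
  [seq redir st m m' a | a <- ps_arcs st] ++
  [seq set_src a m' | a <- ps_arcs st & src a == m].

Lemma G0_keep st m m' a : a \in ps_arcs st ->
  ~~ ((dst a == m) && (src a \in ps_U st)) -> a \in G0 st m m'.
Proof.
move=> Ha Hn; rewrite mem_cat; apply/orP; left; apply/mapP; exists a => //.
by rewrite /redir (negbTE Hn).
Qed.

Lemma G0_redir st m m' a : a \in ps_arcs st -> dst a = m -> src a \in ps_U st ->
  set_dst a m' \in G0 st m m'.
Proof.
move=> Ha Hd Hs; rewrite mem_cat; apply/orP; left; apply/mapP; exists a => //.
by rewrite /redir Hd eqxx Hs.
Qed.

Lemma G0_copy st m m' a : a \in ps_arcs st -> src a = m ->
  set_src a m' \in G0 st m m'.
Proof.
move=> Ha Hs; rewrite mem_cat; apply/orP; right; apply/mapP; exists a => //.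
by rewrite mem_filter Hs eqxx.
Qed.

Lemma G0_cases st m m' b : b \in G0 st m m' ->
  (exists2 a, a \in ps_arcs st & [/\ b = set_dst a m', dst a = m & src a \in ps_U st]) \/
  (exists2 a, a \in ps_arcs st & b = a /\ ~~ ((dst a == m) && (src a \in ps_U st))) \/
  (exists2 a, a \in ps_arcs st & b = set_src a m' /\ src a = m).
Proof.
rewrite mem_cat => /orP[/mapP[a Ha ->]|/mapP[a]].
  rewrite /redir; case: ifP => [/andP[/eqP Hd Hs]|/negbT Hn].
    by left; exists a.
  by right; left; exists a.
by rewrite mem_filter => /andP[/eqP Hs Ha] ->; right; right; exists a.
Qed.

Lemma trans_M st m m' q y w : Sinv st -> y \in ps_M st ->
  is_path (ps_arcs st) y w q -> is_path (G0 st m m') y w q.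
Proof.
move=> S; elim: q y => [|a q IH] y //= Hy /and3P[Ha /eqP Hs Hp].
have HsU : src a \notin ps_U st.
  by apply/negP => /(s_disj S); rewrite Hs Hy.
rewrite G0_keep //=; last by rewrite (negbTE HsU) andbF.
rewrite Hs eqxx /=; apply: IH Hp.
case/andP: (s_end S Ha) => _ /orP[//|/(s_inU S Ha) H].
by rewrite H in HsU.
Qed.

Lemma trans_U st m m' q y w : Sinv st -> m \in ps_M st -> y \in ps_U st ->
  is_path (ps_arcs st) y w q ->
  exists q' w', [/\ is_path (G0 st m m') y w' q', labs q' = labs q &
                    (w' = w \/ (w = m /\ w' = m'))].
Proof.
move=> S Hm; elim: q y => [|a q IH] y Hy /=.
  by move/eqP => ->; exists [::], w; split => //=; left.
case/and3P=> Ha /eqP Hs Hp.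
have HsU : src a \in ps_U st by rewrite Hs.
case/andP: (s_end S Ha) => _ /orP[HdM|HdU].
- case: (eqVneq (dst a) m) => [Hdm|Hdm].
  + case: q Hp {IH} => [|b q] Hp /=.
      exists [:: set_dst a m'], m'; split => //; last first.
        by right; split => //; move/eqP: Hp <-.
      by rewrite path_cons (G0_redir m' Ha Hdm HsU) src_sd dst_sd Hs /= !eqxx.
    case/and3P: Hp => Hb /eqP Hbs Hq.
    exists [:: set_dst a m', set_src b m' & q], w; split => //; last by left.
    rewrite !path_cons (G0_redir m' Ha Hdm HsU) (G0_copy m' Hb) ?Hbs //.
    rewrite src_sd dst_sd src_ss dst_ss Hs !eqxx /=.
    apply: (@trans_M _ _ _ _ _ _ S _ Hq).
    case/andP: (s_end S Hb) => _ /orP[//|/(s_inU S Hb)].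
    by rewrite Hbs Hdm => /(s_disj S)/negP/(_ Hm).
  + exists (a :: q), w; split => //; last by left.
    rewrite /= G0_keep //=; last by rewrite (negbTE Hdm).
    by rewrite Hs eqxx /=; apply: (@trans_M _ _ _ _ _ _ S _ Hp).
- have Hdm : dst a != m.
    by apply/eqP => Hd; move/negP: (s_disj S HdU); rewrite Hd; apply.
  case: (IH _ HdU Hp) => q' [w' [Hq' Hl Hw]].
  exists (a :: q'), w'; split => //=; last by rewrite Hl.
  rewrite G0_keep //=; last by rewrite (negbTE Hdm).
  by rewrite Hs eqxx.
Qed.


Lemma kept_mem (G : seq arc) bm tp a : size bm = size G ->
  (forall i d, i < size G -> ~~ nth false bm i -> removable feas M u G tp (nth d G i)) ->
  a \in G -> ~ removable feas M u G tp a -> a \in mask bm G.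
Proof.
move=> Hsz Hrem Ha Hnr.
have Hi : index a G < size G by rewrite index_mem.
case Hb: (nth false bm (index a G)).
  by rewrite -(nth_index a Ha) mem_mask_nth.
by case: Hnr; move: (Hrem _ a Hi (negbT Hb)); rewrite nth_index.
Qed.

Lemma M0_neq v : v \in M0 -> v != u.
Proof. by rewrite mem_filter => /andP[]. Qed.

Lemma split_pres st l m s m' st' :
  Sinv st -> Winv st -> Linv' st l (m :: s) -> split_node feas M u st m m' st' ->
  [/\ Sinv st', Winv st' & Linv' st' l s].
Proof.
move=> S Wi [Lc Ls Lu Lt] H.
case: H => Hm Hm'M Hm'U Hst [bm [Hsz Hrem ->]].
rewrite -/(G0 st m m') in Hsz Hrem *.
set tp' := (if m == t then Some m' else ps_tp st).
have Hrem' : forall i d, i < size (G0 st m m') -> ~~ nth false bm i ->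
    removable feas M u (G0 st m m') tp' (nth d (G0 st m m') i).
  by move=> i d Hi Hb; exact: (proj2 (Hrem i d Hi Hb)).
have Hmu : m != u by apply: M0_neq; rewrite -(s_M S).
have HmU : m \notin ps_U st by apply/negP => /(s_disj S)/negP/(_ Hm).
have Hsm' : forall a, a \in ps_arcs st -> src a != m' by move=> a /Hst [].
have Hdm' : forall a, a \in ps_arcs st -> dst a != m' by move=> a /Hst [].
have HvM : forall v, v \in ps_M st -> v != m'.
  by move=> v Hv; apply/eqP => Hv'; rewrite -Hv' Hv in Hm'M.
have Hms : m \in m :: s by rewrite mem_head.
split.
- constructor => /=.
  + exact: s_M S.
  + by rewrite in_cons (s_uU S) orbT.
  + move=> v; rewrite in_cons => /orP[/eqP->//|/(s_disj S)//].
  + move=> b /mem_mask /G0_cases [[a Ha [-> Hd Hs]]|[[a Ha [-> _]]|[a Ha [-> Hs]]]].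
    * by rewrite src_sd dst_sd !in_cons eqxx Hs !orbT.
    * move: (s_end S Ha); rewrite !in_cons.
      by case/andP => /orP[->|->] /orP[->|->]; rewrite ?orbT.
    * rewrite src_ss dst_ss !in_cons eqxx /=.
      by case/andP: (s_end S Ha) => _ /orP[->|->]; rewrite ?orbT.
  + move=> b /mem_mask /G0_cases [[a Ha [-> Hd Hs]]|[[a Ha [-> _]]|[a Ha [-> Hs]]]].
    * by rewrite src_sd !in_cons Hs orbT.
    * rewrite !in_cons => /orP[/eqP Hd|Hd]; first by move: (Hdm' _ Ha); rewrite Hd eqxx.
      by rewrite (s_inU S Ha Hd) orbT.
    * by rewrite src_ss !in_cons eqxx.
  + move=> b /mem_mask /G0_cases [[a Ha [-> Hd Hs]]|[[a Ha [-> _]]|[a Ha [-> Hs]]]].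
    * by rewrite src_sd dst_sd eqxx (negbTE (Hsm' _ Ha)) -Hd (s_lay S Ha).
    * by rewrite (negbTE (Hsm' _ Ha)) (negbTE (Hdm' _ Ha)) (s_lay S Ha).
    * by rewrite src_ss dst_ss eqxx (negbTE (Hdm' _ Ha)) -Hs (s_lay S Ha).
  + by move=> v Hv; rewrite (negbTE (HvM _ Hv)) (s_layM S).
  + move=> Hut; rewrite /tp'; case: eqP => [Hmt|_]; last exact: s_ut S Hut.
    by move: Hmu; rewrite Hmt -Hut eqxx.
  + rewrite /tp' => w; case: eqP => _; first by case=> <-; rewrite mem_head.
    by move=> Hw; rewrite in_cons (s_tp S Hw) orbT.
- move=> x Hx; case: (Wi x Hx) => [[p [Hp HpM Hxe]]|[p [q [w [Hp Hq Hw Hxe]]]]].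
  + have Hp0 : is_path (G0 st m m') r t p.
      apply: (path_sub Hp) => a Ha; apply: G0_keep; first exact: path_mem Hp Ha.
      move/allP: HpM => /(_ a Ha) /andP[HsM _].
      by rewrite andbC; apply/negP => /andP[/(s_disj S)/negP/(_ HsM)].
    left; exists p; split => //=.
    apply: (path_sub Hp0) => a Ha; apply: (kept_mem Hsz Hrem').
      exact: path_mem Hp0 Ha.
    by move=> Hr; apply: Hr; exists x; split => //; left; exists p.
  + have [q' [w' [Hq' Hl Hw']]] := trans_U m' S Hm (s_uU S) Hq.
    have Hw'' : w' = t \/ tp' = Some w'.
      case: Hw' => [->|[Hwm ->]].
        case: Hw => [->|Htp]; first by left.
        right; rewrite /tp'; case: eqP => // Hmt.
        have Htu : t <> u by move=> Htu; move: Hmu; rewrite Hmt Htu eqxx.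
        by case: (Lt _ Htp Htu) => _; rewrite -Hmt Hms.
      case: Hw => [Hwt|Htp].
        by right; rewrite /tp' -Hwm Hwt eqxx.
      by move: (s_tp S Htp); rewrite Hwm (negbTE HmU).
    right; exists p, q', w'; split => //; last by rewrite Hxe Hl.
    apply: (path_sub Hq') => a Ha; apply: (kept_mem Hsz Hrem').
      exact: path_mem Hq' Ha.
    by move=> Hr; apply: Hr; exists x; split => //; right; exists p, q', w'; rewrite Hxe Hl.
- split => /=.
  + move=> b /mem_mask /G0_cases [[a Ha [-> Hd Hs]]|[[a Ha [-> Hn]]|[a Ha [-> Hs]]]].
    * by rewrite dst_sd => _ /HvM; rewrite eqxx.
    * rewrite (negbTE (Hsm' _ Ha)) in_cons => /orP[/eqP Hs|HsU] HdM.
        by move: (Hsm' _ Ha); rewrite Hs eqxx.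
      case: (Lc _ Ha HsU HdM) => [[Hl]|->]; last by right.
      rewrite in_cons => /orP[/eqP Hd|Hd]; last by left.
      by move: Hn; rewrite Hd eqxx HsU.
    * move=> _ _; rewrite src_ss eqxx; right; exact: (Ls _ Hms).2.
  + move=> m0 Hm0; have [Hm0M Hl] : m0 \in ps_M st /\ ps_layer st m0 = l.+1 by apply: Ls; rewrite in_cons Hm0 orbT.
    by rewrite (negbTE (HvM _ Hm0M)).
  + by move: Lu; rewrite cons_uniq => /andP[].
  + rewrite /tp' => w; case: eqP => [Hmt|_] Hw Htu.
      split; last by move: Lu; rewrite cons_uniq -Hmt => /andP[].
      by rewrite -(Ls _ Hms).2 (s_layM S Hm) Hmt t_layer.
    by case: (Lt _ Hw Htu) => ->; rewrite in_cons negb_or => /andP[].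
Qed.


Lemma seq_pres st s st2 l : split_seq feas M u st s st2 ->
  Sinv st -> Winv st -> Linv' st l s -> [/\ Sinv st2, Winv st2 & Linv' st2 l [::]].
Proof.
elim => [st0|st0 m s0 st1 st3 [m' Hsp] _ IH] S Wi Li //.
by case: (split_pres S Wi Li Hsp) => S1 W1 L1; exact: IH.
Qed.

Lemma iter_pres st st' l : Sinv st -> Winv st -> Linv st l ->
  peel_iter feas M u st st' -> [/\ Sinv st', Winv st' & Linv st' l.+1].
Proof.
move=> S Wi [Lc Lt] [s [Hu Hne Hs Hseq]].
have Hsm : forall m, m \in s -> m \in ps_M st /\ ps_layer st m = l.+1.
  move=> m; rewrite Hs /has_in_from_U => /andP[HmM /hasP[a Ha /andP[HsU /eqP Hd]]].
  by split => //; rewrite -Hd (s_lay S Ha) (Lc _ Ha HsU) // Hd.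
have Li : Linv' st l s.
  split => //.
  - move=> a Ha HsU HdM; left; split; first exact: Lc.
    by rewrite Hs /has_in_from_U HdM /=; apply/hasP; exists a => //; rewrite HsU eqxx.
  - move=> w Hw Htu; exfalso.
    case: s Hne Hs Hsm {Hseq Hu} => [//|m s] _ Hs Hsm.
    have [HmM Hml] := Hsm m (mem_head _ _).
    rewrite (Lt _ Hw Htu) (s_layM S HmM) in Hml.
    have : mdd_layer M m <= n.+1.
      by apply: node_layer; move: HmM; rewrite (s_M S) mem_filter => /andP[].
    by rewrite Hml ltnn.
case: (seq_pres Hseq S Wi Li) => S2 W2 [Lc2 _ _ Lt2]; split => //; split.
- by move=> a Ha HsU HdM; case: (Lc2 _ Ha HsU HdM) => // [[_]].
- by move=> w Hw Htu; case: (Lt2 _ Hw Htu).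
Qed.

Lemma loop_pres st st2 l : peel_loop feas M u st st2 ->
  Sinv st -> Winv st -> Linv st l -> [/\ Sinv st2, Winv st2 & ~~ cross_arc st2].
Proof.
move=> H; elim: H l => [st0 Hc|st0 st1 st3 _ Hit _ IH] l S Wi Li //.
by case: (iter_pres S Wi Li Hit) => S1 W1 L1; exact: IH L1.
Qed.

Lemma init_pres : (forall x, feas x -> SolM M x) ->
  [/\ Sinv (peel_init M u), Winv (peel_init M u) & Linv (peel_init M u) (mdd_layer M u)].
Proof.
move=> Hsol.
have HuM0 : u \notin M0 by rewrite mem_filter eqxx.
have HM0 : forall v, v \in mdd_nodes M -> v != u -> v \in M0.
  by move=> v Hv Hvu; rewrite mem_filter Hvu.
split.
- constructor => //=.
  + by rewrite mem_head.
  + by move=> v; rewrite in_cons orbF => /eqP ->.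
  + move=> a; rewrite mem_filter => /andP[Hdu Ha]; case: (arc_wf Ha) => Hs Hd _.
    rewrite (HM0 _ Hd Hdu) /= andbT in_cons orbF.
    by case: (eqVneq (src a) u) => [->|Hsu]; rewrite ?eqxx ?orbT // HM0.
  + move=> a; rewrite mem_filter in_cons orbF => /andP[Hdu _] Hd.
    by rewrite Hd in Hdu.
  + by move=> a; rewrite mem_filter => /andP[_ /arc_wf[]].
  + by move=> <-; rewrite eqxx.
  + by move=> w; case: ifP => // _ [<-]; rewrite mem_head.
- move=> x Hx; have [p [Hp Hxe]] := Hsol x Hx.
  case: (path_split_u u Hp) => [[Hru Hall]|[p1 [p2 [Hpe H1 H2 H3]]]].
  + left; exists p; split => //.
      apply: (path_sub Hp) => a Ha; rewrite /= mem_filter (path_mem Hp Ha) andbT.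
      by case/andP: (Hall a Ha).
    apply/allP => a Ha /=; case/andP: (Hall a Ha) => Hsu Hdu.
    case: (arc_wf (path_mem Hp Ha)) => Hs Hd _.
    by rewrite !HM0.
  + right; exists p1, p2, t; split; [exact: H1 | | by left | by rewrite Hxe Hpe map_cat].
    apply: (path_sub H2) => a Ha; rewrite /= mem_filter H3 //=.
    by rewrite Hpe in Hp; apply: (path_mem Hp); rewrite mem_cat Ha orbT.
- split => /=.
  + by move=> a _; rewrite in_cons orbF => /eqP ->.
  + by move=> w; case: eqP => // <- _.
Qed.

Definition Finv (st : pstate L W) :=
  (forall v, v \in ps_U st -> v \notin ps_M st) /\
  forall x, feas x ->
  (exists p, [/\ is_path (ps_arcs st) r t p, allM st p & x = labs p]) \/
  (exists p q w, [/\ is_path (mdd_arcs M) r u p, is_path (ps_arcs st) u w q,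
      all (fun a => (src a \in ps_U st) && (dst a \in ps_U st)) q,
      ps_tp st = Some w & x = labs p ++ labs q]).

Lemma stayU st q y w : Sinv st -> ~~ cross_arc st -> y \in ps_U st ->
  is_path (ps_arcs st) y w q ->
  all (fun a => (src a \in ps_U st) && (dst a \in ps_U st)) q && (w \in ps_U st).
Proof.
move=> S Hc; elim: q y => [|a q IH] y Hy /=; first by move/eqP <-.
case/and3P => Ha /eqP Hs Hp.
have HdU : dst a \in ps_U st.
  case/andP: (s_end S Ha) => _ /orP[HdM|//].
  by move: Hc; rewrite /cross_arc; case/hasP; exists a => //; rewrite Hs Hy HdM.
by rewrite Hs Hy HdU /=; apply: IH Hp.
Qed.

Lemma loop_final st : Sinv st -> Winv st -> ~~ cross_arc st -> Finv st.
Proof.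
move=> S Wi Hc; split; first exact: s_disj S.
move=> x Hx; case: (Wi x Hx) => [HA|[p [q [w [Hp Hq Hw Hxe]]]]]; first by left.
right; exists p, q, w; case/andP: (stayU S Hc (s_uU S) Hq) => Hall HwU.
split => //; case: Hw => // Hwt.
have Htu : t = u.
  apply/eqP; apply: negbNE; apply/negP => Htu.
  move: (s_disj S HwU); rewrite Hwt (s_M S) mem_filter t_node Htu.
  by [].
by rewrite (s_ut S (esym Htu)) Hwt Htu.
Qed.

Lemma trim_pres st st2 : trim_loop M st st2 -> Finv st -> Finv st2.
Proof.
elim => // st0 v st3 Htr _ IH [Fd Fw]; apply: IH.
case/and4P: Htr => HvM Hvr Hvt Hno.
split => /=.
  by move=> w /Fd; rewrite mem_filter negb_and => ->; rewrite orbT.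
move=> x Hx; case: (Fw x Hx) => [[p [Hp HpM Hxe]]|[p [q [w [Hp Hq Hall Htp Hxe]]]]].
- have Hav : forall a, a \in p -> (src a != v) && (dst a != v).
    move=> a Ha; have HaG := path_mem Hp Ha.
    apply/andP; split; apply/eqP => Hav.
    + case: (path_pred Hp Ha) => [Hr|[b Hb Hbd]]; first by rewrite -Hav Hr eqxx in Hvr.
      have Hin : has (fun a => dst a == v) (ps_arcs st0).
        by apply/hasP; exists b; rewrite ?(path_mem Hp Hb) // Hbd Hav.
      have Hout : has (fun a => src a == v) (ps_arcs st0).
        by apply/hasP; exists a; rewrite // Hav.
      by rewrite Hin Hout in Hno.
    + case: (path_succ Hp Ha) => [Ht|[b Hb Hbs]]; first by rewrite -Hav Ht eqxx in Hvt.
      have Hout : has (fun a => src a == v) (ps_arcs st0).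
        by apply/hasP; exists b; rewrite ?(path_mem Hp Hb) // Hbs Hav.
      have Hin : has (fun a => dst a == v) (ps_arcs st0).
        by apply/hasP; exists a; rewrite // Hav.
      by rewrite Hin Hout in Hno.
  left; exists p; split => //.
    apply: (path_sub Hp) => a Ha; rewrite mem_filter (Hav a Ha).
    exact: path_mem Hp Ha.
  apply/allP => a Ha /=; rewrite !mem_filter.
  case/andP: (Hav a Ha) => -> ->; move/allP: HpM => /(_ a Ha) //.
- right; exists p, q, w; split => //.
  apply: (path_sub Hq) => a Ha; rewrite mem_filter (path_mem Hq Ha) andbT.
  move/allP: Hall => /(_ a Ha) /andP[Hs Hd].
  apply/andP; split; apply/eqP => Hv.
  + by move: (Fd _ Hs); rewrite Hv HvM.
  + by move: (Fd _ Hd); rewrite Hv HvM.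
Qed.


Lemma main_sec st : (forall x, feas x -> SolM M x) -> peel_run feas M u st ->
  forall x, feas x -> SolMstar M st x \/ SolUbar M u st x.
Proof.
move=> Hsol [st1 [Hl Ht]] x Hx.
case: (init_pres Hsol) => S0 W0 L0.
case: (loop_pres Hl S0 W0 L0) => S1 W1 Hc.
case: (trim_pres Ht (loop_final S1 W1 Hc)) => _ /(_ x Hx).
case=> [[p [Hp HpM Hxe]]|[p [q [w [Hp Hq Hall Htp Hxe]]]]].
- left; exists p; split => //; apply: (path_sub Hp) => a Ha.
  by rewrite mem_filter (path_mem Hp Ha) andbT; exact: (allP HpM).
- right; exists w; split => //; exists p, q; split => //; split => //; apply: (path_sub Hq) => a Ha.
  by rewrite mem_filter (path_mem Hq Ha) andbT; exact: (allP Hall).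
Qed.

End Main.

Theorem mainTheorem1 (L W : eqType) (n : nat) (D : nat -> pred L)
    (feas : seq L -> Prop) (M : mdd L W) (u : nat) (st : pstate L W) :
  feasible_set n D feas ->
  wf_mdd n D M ->
  (forall x, feas x -> SolM M x) ->
  u \in mdd_nodes M ->
  exact M u ->
  peel_run feas M u st ->
  forall x, feas x -> SolMstar M st x \/ SolUbar M u st x.
Proof.
move=> _ Hwf Hsol _ _ Hrun; exact: (main_sec Hwf Hsol Hrun).
Qed.
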